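(* Let $\mathfrak{P}=(\rho_{t_0},\mathcal{E}_{t_1\leftarrow t_0},\dots,\mathcal{E}_{t_n\leftarrow t_{n-1}})$ be a multi-time quantum process with $\mathcal{H}_{t_k}=\mathbb{C}^d$, and let $\overrightarrow{\Upsilon}_{t_k\cdots t_0}$ denote the right KD temporal state of the process truncated at time $t_k$. Then $\overrightarrow{\Upsilon}_{t_0}=\rho_{t_0}$ and, for $k=1,\dots,n$, $$\overrightarrow{\Upsilon}_{t_k\cdots t_0}=J[\mathcal{E}_{t_k\leftarrow t_{k-1}}]\star\overrightarrow{\Upsilon}_{t_{k-1}\cdots t_0};$$ that is, $\overrightarrow{\Upsilon}_{t_n\cdots t_0}=J[\mathcal{E}_{t_n\leftarrow t_{n-1}}]\star(\cdots\star(J[\mathcal{E}_{t_1\leftarrow t_0}]\star\rho_{t_0})\cdots)$.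
   Context: A multi-time quantum process consists of a density operator $\rho_{t_0}$ on $\mathbb{C}^d$ and CPTP maps $\mathcal{E}_{t_j\leftarrow t_{j-1}}$ on $\mathbf{B}(\mathbb{C}^d)$, extended linearly to all operators. For complete families of orthogonal projectors at each time, the right temporal KD distribution is $\overrightarrow{Q}_{\rm KD}(b_n,\dots,b_0)=\operatorname{Tr}[\mathcal{E}_{t_n\leftarrow t_{n-1}}(\cdots\mathcal{E}_{t_1\leftarrow t_0}(\rho_{t_0}\Pi^{t_0}_{b_0})\Pi^{t_1}_{b_1}\cdots)\Pi^{t_n}_{b_n}]$. Let $\sigma_0=\mathbb{I},\sigma_1,\dots,\sigma_{d^2-1}$ be Hermitian operators on $\mathbb{C}^d$ with $\operatorname{Tr}\sigma_j=0$ ($j\ge1$) and $\operatorname{Tr}(\sigma_\mu\sigma_\nu)=d\,\delta_{\mu\nu}$; measuring each $\sigma_\mu$ via its spectral projectors with eigenvalue outcomes, set $\overrightarrow{T}^{\mu_n,\dots,\mu_0}=\sum a_n\cdots a_0\,\overrightarrow{Q}_{\rm KD}(a_n,\dots,a_0\mid\sigma_{\mu_n},\dots,\sigma_{\mu_0})$ and define the right KD temporal state $\overrightarrow{\Upsilon}_{t_n\cdots t_0}=d^{-(n+1)}\sum_\mu\overrightarrow{T}^{\mu_n,\dots,\mu_0}\sigma_{\mu_n}\otimes\cdots\otimes\sigma_{\mu_0}$ on $\mathcal{H}_{t_n}\otimes\cdots\otimes\mathcal{H}_{t_0}$. For $M\in\mathbf{B}(\mathcal{H}_B\otimes\mathcal{H}_A)$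 and $N\in\mathbf{B}(\mathcal{H}_C\otimes\mathcal{H}_B)$, $N\star M:=(N_{CB}\otimes\mathbb{I}_A)(\mathbb{I}_C\otimes M_{BA})$ (with $\mathcal{H}_A$ possibly trivial, so $N\star\rho=N(\mathbb{I}_C\otimes\rho)$ for $\rho\in\mathbf{B}(\mathcal{H}_B)$). The Jamiołkowski operator of a channel $\mathcal{E}:\mathbf{B}(\mathcal{H}_{t_{i-1}})\to\mathbf{B}(\mathcal{H}_{t_i})$ is $J[\mathcal{E}]=\sum_{k,l}\mathcal{E}(|k\rangle\langle l|)\otimes|l\rangle\langle k|\in\mathbf{B}(\mathcal{H}_{t_i}\otimes\mathcal{H}_{t_{i-1}})$. *)

(* Defs.v *)
From HB Require Import structures.
From mathcomp Require Import all_boot all_order all_algebra.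
From mathcomp Require Import mxtens.
Set Implicit Arguments. Unset Strict Implicit. Unset Printing Implicit Defensive.
Import Order.TTheory GRing.Theory Num.Theory.
Local Open Scope ring_scope.

(* Complex scalars: an arbitrary numeric algebraically closed field C
   (e.g. the complex numbers); operators on C^d are 'M[C]_d. *)
Section Defs.
Variable C : numClosedFieldType.

Definition adjm m n (A : 'M[C]_(m, n)) : 'M[C]_(n, m) := map_mx Num.conj A^T.

Definition hermitian n (A : 'M[C]_n) : Prop := adjm A = A.

Definition psd n (A : 'M[C]_n) : Prop :=
  hermitian A /\ forall v : 'cV[C]_n, 0 <= (adjm v *m A *m v) 0 0.

Definition density n (rho : 'M[C]_n) : Prop := psd rho /\ \tr rho = 1.

Definition cptp n (E : 'M[C]_n -> 'M[C]_n) : Prop :=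
  exists K : seq 'M[C]_n,
    (forall X, E X = \sum_(k <- K) k *m X *m adjm k) /\
    \sum_(k <- K) adjm k *m k = 1%:M.

Definition orth_proj n (P : 'M[C]_n) : Prop := P *m P = P /\ hermitian P.

Definition spectral_decomp n (A : 'M[C]_n) (s : seq (C * 'M[C]_n)) : Prop :=
  [/\ uniq (map fst s),
      forall i, (i < size s)%N -> orth_proj (nth (0, 0) s i).2 /\
                                 (nth (0, 0) s i).2 != 0,
      forall i j, (i < size s)%N -> (j < size s)%N -> i != j ->
                  (nth (0, 0) s i).2 *m (nth (0, 0) s j).2 = 0,
      \sum_(x <- s) x.2 = 1%:M &
      A = \sum_(x <- s) x.1 *: x.2].

Definition op_basis d (sigma : 'I_(d * d) -> 'M[C]_d) : Prop :=
  [/\ forall mu, val mu = 0%N -> sigma mu = 1%:M,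
      forall mu, hermitian (sigma mu),
      forall mu, val mu != 0%N -> \tr (sigma mu) = 0 &
      forall mu nu, \tr (sigma mu *m sigma nu) = d%:R * (mu == nu)%:R].

Fixpoint dpow (d k : nat) : nat := if k is k'.+1 then (d * dpow d k')%N else 1%N.

(* tens d k f = f (k-1) (x) ... (x) f 0 (x) [1]  on C^d (x) ... (x) C^d *)
Fixpoint tens d (k : nat) (f : nat -> 'M[C]_d) : 'M[C]_(dpow d k) :=
  if k is k'.+1 then tensmx (f k') (tens k' f) else 1%:M.

Definition jam d (E : 'M[C]_d -> 'M[C]_d) : 'M[C]_(d * d) :=
  \sum_(k < d) \sum_(l < d) tensmx (E (delta_mx k l)) (delta_mx l k).

Definition star c b a (N : 'M[C]_(c * b)) (M : 'M[C]_(b * a)) : 'M[C]_(c * (b * a)) :=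
  castmx (esym (mulnA c b a), esym (mulnA c b a)) (tensmx N (1%:M : 'M[C]_a))
  *m tensmx (1%:M : 'M[C]_c) M.

Definition cart T (ls : seq (seq T)) : seq (seq T) :=
  foldr (fun l acc => [seq x :: y | x <- l, y <- acc]) [:: [::]] ls.

Fixpoint kd_evolve d (E : nat -> 'M[C]_d -> 'M[C]_d) (j : nat) (X : 'M[C]_d)
  (Ps : seq 'M[C]_d) : 'M[C]_d :=
  if Ps is P :: Ps' then kd_evolve E j.+1 (E j X *m P) Ps' else X.

(* right temporal KD quasiprobability for projectors Ps = [:: P_0; ...; P_k]:
   Tr[E_k( ... E_1(rho P_0) P_1 ... ) P_k] *)
Definition QKD d (rho : 'M[C]_d) (E : nat -> 'M[C]_d -> 'M[C]_d) (Ps : seq 'M[C]_d) : C :=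
  if Ps is P0 :: Ps' then \tr (kd_evolve E 1 (rho *m P0) Ps') else 0.

(* T^{mu_k,...,mu_0}, with ms = [:: mu_0; ...; mu_k] and spec mu the spectral
   decomposition (eigenvalue, projector) of sigma_mu:
   sum over outcomes of a_k ... a_0 Q_KD(a_k, ..., a_0) *)
Definition Tcoef d (rho : 'M[C]_d) (E : nat -> 'M[C]_d -> 'M[C]_d)
  (spec : 'I_(d * d) -> seq (C * 'M[C]_d)) (ms : seq 'I_(d * d)) : C :=
  \sum_(s <- cart [seq spec m | m <- ms])
     (\prod_(x <- s) x.1) * QKD rho E [seq x.2 | x <- s].

(* right KD temporal state of the process truncated at time t_k,
   an operator on H_{t_k} (x) ... (x) H_{t_0} *)
Definition KDstate d (rho : 'M[C]_d) (E : nat -> 'M[C]_d -> 'M[C]_d)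
  (sigma : 'I_(d * d) -> 'M[C]_d) (spec : 'I_(d * d) -> seq (C * 'M[C]_d))
  (k : nat) : 'M[C]_(dpow d k.+1) :=
  ((d%:R : C) ^+ k.+1)^-1 *:
    \sum_(mu : {ffun 'I_k.+1 -> 'I_(d * d)})
       Tcoef rho E spec [seq mu i | i <- enum 'I_k.+1] *:
       tens k.+1 (fun j => sigma (mu (inord j))).

End Defs.

(* Main.v *)
Require Import Defs.
From HB Require Import structures.
From mathcomp Require Import all_boot all_order all_algebra.
From mathcomp Require Import mxtens.
From mathcomp Require Import zify.
Import Order.TTheory GRing.Theory Num.Theory.
Local Open Scope ring_scope.

Section Generic.
Variable C : numClosedFieldType.

Lemma sum_pair (V : nmodType) m n (F : 'I_m -> 'I_n -> V) :
  \sum_(p < m * n) F (mxtens_unindex p).1 (mxtens_unindex p).2 =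
  \sum_(i < m) \sum_(j < n) F i j.
Proof.
rewrite pair_big /=; symmetry.
apply: (reindex (@mxtens_unindex m n)) => /=.
by exists (@mxtens_index m n)=> i _; rewrite (mxtens_indexK, mxtens_unindexK).
Qed.

Lemma tr_tensmx m n (A : 'M[C]_m) (B : 'M[C]_n) : \tr (A *t B) = \tr A * \tr B.
Proof.
rewrite /mxtrace mulr_sum; apply: eq_bigr => p _; by rewrite !mxE.
Qed.

Lemma tens_mul d k (f g : nat -> 'M[C]_d) :
  tens k f *m tens k g = tens k (fun j => f j *m g j).
Proof. elim: k => [|k IH] /=; first by rewrite mulmx1. by rewrite tensmx_mul IH. Qed.

Lemma tr_tens d k (f : nat -> 'M[C]_d) :
  \tr (tens k f) = \prod_(i < k) \tr (f i).
Proof.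
elim: k => [|k IH] /=; first by rewrite mxtrace1 big_ord0.
by rewrite tr_tensmx IH big_ord_recr /= mulrC.
Qed.

Lemma eq_tens d k (f g : nat -> 'M[C]_d) :
  (forall j, (j < k)%N -> f j = g j) -> tens k f = tens k g.
Proof.
elim: k => [|k IH] H //=; rewrite H // IH // => j jk; apply: H; exact: ltnW.
Qed.

Lemma tensA a b c (A : 'M[C]_a) (B : 'M[C]_b) (D : 'M[C]_c) :
  castmx (esym (mulnA a b c), esym (mulnA a b c)) ((A *t B) *t D) = A *t (B *t D).
Proof.
apply/matrixP => P Q.
case: (mxtens_indexP P) => i P'; case: (mxtens_indexP P') => j k.
case: (mxtens_indexP Q) => i' Q'; case: (mxtens_indexP Q') => j' k'.
rewrite castmxE !tensmxE.
have -> : cast_ord (esym (esym (mulnA a b c))) (mxtens_index (i, mxtens_index (j, k)))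
   = mxtens_index (mxtens_index (i, j), k).
  apply: val_inj => /=; rewrite mulnDl -mulnA addnA; done.
have -> : cast_ord (esym (esym (mulnA a b c))) (mxtens_index (i', mxtens_index (j', k')))
   = mxtens_index (mxtens_index (i', j'), k').
  apply: val_inj => /=; rewrite mulnDl -mulnA addnA; done.
by rewrite !tensmxE mulrA.
Qed.

Lemma tr_castmx m m' (e : m = m') (M : 'M[C]_m) : \tr (castmx (e, e) M) = \tr M.
Proof. by case: m' / e. Qed.

Lemma castmx_mulmx m m' (e : m = m') (A B : 'M[C]_m) :
  castmx (e, e) A *m castmx (e, e) B = castmx (e, e) (A *m B).
Proof. by case: m' / e. Qed.

Lemma castmx_sum m m' n n' (e : (m = m') * (n = n')) I (r : seq I) (F : I -> 'M[C]_(m, n)) :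
  castmx e (\sum_(i <- r) F i) = \sum_(i <- r) castmx e (F i).
Proof.
apply/matrixP => i j; rewrite castmxE !summxE; apply: eq_bigr => k _.
by rewrite castmxE.
Qed.

Lemma tensmx_suml m n p q I (r : seq I) (F : I -> 'M[C]_(m, n)) (B : 'M[C]_(p, q)) :
  (\sum_(i <- r) F i) *t B = \sum_(i <- r) (F i *t B).
Proof.
apply/matrixP => P Q; rewrite mxE !summxE mulr_suml; apply: eq_bigr => i _.
by rewrite !mxE.
Qed.

Lemma tensmxZl m n p q (a : C) (A : 'M[C]_(m, n)) (B : 'M[C]_(p, q)) :
  (a *: A) *t B = a *: (A *t B).
Proof. by apply/matrixP => P Q; rewrite !mxE mulrA. Qed.

Lemma tr_delta n (M : 'M[C]_n) i j : \tr (M *m delta_mx i j) = M j i.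
Proof.
rewrite /mxtrace (bigD1 j) //= big1 ?addr0.
  rewrite mxE (bigD1 i) //= big1 ?addr0; first by rewrite mxE !eqxx mulr1.
  by move=> k /negbTE ki; rewrite mxE ki mulr0.
move=> k /negbTE kj; rewrite mxE big1 // => l _; rewrite mxE kj andbF mulr0 //.
Qed.

Lemma tr_sum n I (r : seq I) (F : I -> 'M[C]_n) :
  \tr (\sum_(i <- r) F i) = \sum_(i <- r) \tr (F i).
Proof.
elim: r => [|x r IH]; first by rewrite !big_nil mxtrace0.
by rewrite !big_cons mxtraceD IH.
Qed.

End Generic.

Section Main.
Variable C : numClosedFieldType.
Variable d : nat.
Hypothesis d_gt0 : (0 < d)%N.
Variable rho : 'M[C]_d.
Variable E : nat -> 'M[C]_d -> 'M[C]_d.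
Variable sigma : 'I_(d * d) -> 'M[C]_d.
Variable spec : 'I_(d * d) -> seq (C * 'M[C]_d).
Hypothesis Hbasis : op_basis sigma.
Hypothesis Hspec : forall mu, spectral_decomp (sigma mu) (spec mu).

Lemma d_neq0 : (d%:R : C) != 0.
Proof. by rewrite pnatr_eq0 -lt0n. Qed.

Lemma tr_sigma a b : \tr (sigma a *m sigma b) = d%:R * (a == b)%:R.
Proof. by case: Hbasis => _ _ _ ->. Qed.

Lemma complete i j k l :
  \sum_a sigma a j i * sigma a k l = d%:R * ((i == k) && (j == l))%:R.
Proof.
pose S : 'M[C]_(d * d) := \matrix_(a, p) sigma a (mxtens_unindex p).1 (mxtens_unindex p).2.
pose T : 'M[C]_(d * d) := \matrix_(p, a) sigma a (mxtens_unindex p).2 (mxtens_unindex p).1.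
have HST : S *m T = (d%:R : C)%:M.
  apply/matrixP => a b; rewrite !mxE.
  under eq_bigr => p _ do rewrite !mxE.
  rewrite (@sum_pair _ _ _ (fun i j => sigma a i j * sigma b j i)).
  rewrite -(mulr_natr (d%:R : C) (a == b)).
  rewrite -tr_sigma /mxtrace; apply: eq_bigr => i0 _.
  by rewrite mxE.
have HTS : (d%:R^-1 *: T) *m S = 1%:M.
  apply: mulmx1C; rewrite -scalemxAr HST scale_scalar_mx mulVf //; exact: d_neq0.
have := congr1 (fun M : 'M[C]_(d * d) => M (mxtens_index (i, j)) (mxtens_index (k, l))) HTS.
rewrite /= !mxE (inj_eq (can_inj (@mxtens_indexK d d))) xpair_eqE.
move=> H; rewrite -H mulr_sumr; apply: eq_bigr => a _.
rewrite !mxE !mxtens_indexK /= mulrA mulrA mulfV ?mul1r //; exact: d_neq0.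
Qed.

Lemma expand (A : 'M[C]_d) :
  A = \sum_a (d%:R^-1 * \tr (A *m sigma a)) *: sigma a.
Proof.
apply/matrixP => k l; rewrite summxE.
under eq_bigr => a _ do rewrite mxE /mxtrace.
under eq_bigr => a _ do under eq_bigr => i _ do rewrite mxE.
transitivity (d%:R^-1 * \sum_(i < d) \sum_(j < d) A i j * \sum_a sigma a j i * sigma a k l).
  under eq_bigr => i _ do under eq_bigr => j _ do rewrite complete.
  rewrite (bigD1 k) //= (bigD1 l) //= !eqxx mulr1 big1 ?addr0.
    rewrite big1 ?addr0; first by rewrite mulrCA mulVf ?mulr1 //; exact: d_neq0.
    by move=> i /negbTE ->; rewrite big1 // => j _; rewrite /= mulr0 mulr0.
  by move=> j /negbTE ->; rewrite andbF mulr0 mulr0.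
symmetry; under eq_bigr => a _ do rewrite -mulrA.
rewrite -mulr_sumr; congr (_ * _).
under eq_bigr => a _ do rewrite mulr_suml.
rewrite exchange_big; apply: eq_bigr => i _.
under eq_bigr => a _ do rewrite mulr_suml.
rewrite exchange_big; apply: eq_bigr => j _.
rewrite mulr_sumr; apply: eq_bigr => a _; by rewrite mulrA.
Qed.

Definition lin (f : 'M[C]_d -> 'M[C]_d) :=
  (forall X Y, f (X + Y) = f X + f Y) /\ (forall a X, f (a *: X) = a *: f X).

Lemma lin_sum f I (r : seq I) (c : I -> C) (F : I -> 'M[C]_d) :
  lin f -> f (\sum_(i <- r) c i *: F i) = \sum_(i <- r) c i *: f (F i).
Proof.
move=> [HD HZ]; elim: r => [|x r IH].
  rewrite !big_nil; have := HZ 0 0; rewrite !scale0r; done.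
by rewrite !big_cons HD HZ IH.
Qed.

Lemma cptp_lin f : cptp f -> lin f.
Proof.
case=> K [HK _]; split => [X Y|a X]; rewrite !HK.
  by rewrite -big_split /=; apply: eq_bigr => k _; rewrite mulmxDr mulmxDl.
by rewrite scaler_sumr; apply: eq_bigr => k _; rewrite -scalemxAr -scalemxAl.
Qed.


Ltac ar := simpl in *; repeat match goal with H : context [size (map _ _)] |- _ => rewrite size_map in H end; rewrite ?size_map; try (apply/andP; split); lia.

Lemma evolve_sum (F : nat -> 'M[C]_d -> 'M[C]_d) Ps : forall j I (r : seq I) (c : I -> C) (G : I -> 'M[C]_d),
  (forall i, (j <= i < j + size Ps)%N -> lin (F i)) ->
  kd_evolve F j (\sum_(x <- r) c x *: G x) Ps = \sum_(x <- r) c x *: kd_evolve F j (G x) Ps.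
Proof.
elim: Ps => [|P Ps IH] j I r c G HF //=.
rewrite lin_sum; last by apply: HF; ar.
rewrite mulmx_suml.
under [X in kd_evolve _ _ X]eq_bigr => x _ do rewrite -scalemxAl.
apply: (IH j.+1 I r c (fun x => F j (G x) *m P)) => i /andP [Hi1 Hi2].
apply: HF; ar.
Qed.

Lemma spec_sum mu : sigma mu = \sum_(x <- spec mu) x.1 *: x.2.
Proof. by case: (Hspec mu). Qed.

Lemma evolve_spec (F : nat -> 'M[C]_d -> 'M[C]_d) ms : forall j X,
  (forall i, (j < i < j + size ms)%N -> lin (F i)) ->
  \sum_(s <- cart [seq spec m | m <- ms]) (\prod_(x <- s) x.1) *: kd_evolve F j X [seq x.2 | x <- s]
  = kd_evolve F j X [seq sigma m | m <- ms].
Proof.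
elim: ms => [|m ms IH] j X HF /=.
  by rewrite big_seq1 big_nil scale1r.
rewrite big_allpairs_dep /= spec_sum mulmx_sumr.
under [X in kd_evolve _ _ X]eq_bigr => x _ do rewrite -scalemxAr.
rewrite evolve_sum; last first.
  move=> i /andP [Hi1 Hi2]; apply: HF; rewrite ?size_map in Hi2 *; ar.
apply: eq_bigr => x _.
rewrite -IH; last first.
  move=> i /andP [Hi1 Hi2]; apply: HF; rewrite ?size_map in Hi2 *; ar.
rewrite scaler_sumr; apply: eq_bigr => y _.
by rewrite big_cons scalerA.
Qed.

Lemma Tcoef_eq ms : (forall i, (1 <= i < size ms)%N -> lin (E i)) ->
  Tcoef rho E spec ms = QKD rho E [seq sigma m | m <- ms].
Proof.
case: ms => [|m ms] HE; first by rewrite /Tcoef /= big_seq1 big_nil mulr0.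
rewrite /Tcoef /= big_allpairs_dep /= spec_sum mulmx_sumr.
under [X in kd_evolve _ _ X]eq_bigr => x _ do rewrite -scalemxAr.
rewrite evolve_sum; last first.
  move=> i /andP [Hi1 Hi2]; apply: HE; rewrite ?size_map in Hi2 *; ar.
rewrite tr_sum; apply: eq_bigr => x _.
rewrite -evolve_spec; last first.
  move=> i /andP [Hi1 Hi2]; apply: HE; rewrite ?size_map in Hi2 *; ar.
rewrite scaler_sumr tr_sum; apply: eq_bigr => y _.
by rewrite big_cons scalerA mxtraceZ.
Qed.

Lemma evolve_rcons (F : nat -> 'M[C]_d -> 'M[C]_d) Ps P : forall j X,
  kd_evolve F j X (rcons Ps P) = F (j + size Ps)%N (kd_evolve F j X Ps) *m P.
Proof.
elim: Ps => [|Q Ps IH] j X /=; first by rewrite addn0.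
by rewrite IH addSnnS.
Qed.

Definition E' := fun i => if i == 0%N then (fun X : 'M[C]_d => X) else E i.

Lemma evolve_E' Ps : forall j X, (0 < j)%N -> kd_evolve E' j X Ps = kd_evolve E j X Ps.
Proof.
elim: Ps => [|P Ps IH] j X Hj //=.
rewrite IH // /E'; case: j Hj => //.
Qed.

Lemma QKD_E' Ps : Ps != [::] -> QKD rho E Ps = \tr (kd_evolve E' 0 rho Ps).
Proof. case: Ps => // P Ps _ /=; by rewrite evolve_E'. Qed.

Definition Ups k := KDstate rho E sigma spec k.
Definition sv (nu : nat -> 'I_(d * d)) j := sigma (nu j).
Definition linE k := forall i, (1 <= i <= k)%N -> lin (E i).
Definition Zk k nu := E' k (kd_evolve E' 0 rho [seq sv nu i | i <- iota 0 k]).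

Lemma dpow_neq0 k : ((d%:R : C) ^+ k) != 0.
Proof. apply: expf_neq0; exact: d_neq0. Qed.

Lemma charD k nu : linE k ->
  \tr (Ups k *m tens k.+1 (sv nu)) = QKD rho E [seq sv nu i | i <- iota 0 k.+1].
Proof.
move=> HE.
rewrite /Ups /KDstate -scalemxAl mxtraceZ mulmx_suml tr_sum.
under eq_bigr => mu _ do rewrite -scalemxAl mxtraceZ tens_mul tr_tens /sv.
under eq_bigr => mu _ do under eq_bigr => i _ do rewrite tr_sigma.
set Q := QKD _ _ _.
rewrite (bigD1 [ffun i : 'I_k.+1 => nu i]) //= addrC big1 ?add0r; rewrite /Q.
  rewrite (eq_bigr (fun _ => d%:R)); last by move=> i _; rewrite ffunE inord_val eqxx mulr1.
  rewrite prodr_const card_ord Tcoef_eq; last first.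
    move=> i /andP [Hi1 Hi2]; apply: HE; rewrite Hi1 /=.
    by rewrite size_map size_enum_ord ltnS in Hi2.
  have -> : [seq sigma m | m <- [seq [ffun i : 'I_k.+1 => nu i] i | i <- enum 'I_k.+1]]
      = [seq sv nu i | i <- iota 0 k.+1].
    rewrite -val_enum_ord -!map_comp; apply: eq_map => i; by rewrite /= ffunE.
  by rewrite mulrCA mulVf ?mulr1 // dpow_neq0.
move=> mu Hmu.
case: (pickP (fun i => mu i != nu i)) => [i Hi | H].
  by rewrite (bigD1 i) //= inord_val (negbTE Hi) mulr0 mul0r mulr0.
exfalso; move/eqP: Hmu; apply; apply/ffunP => i; rewrite ffunE.
by move: (H i) => /= /negbFE /eqP.
Qed.

Lemma QKD_last k nu :
  QKD rho E [seq sv nu i | i <- iota 0 k.+1] = \tr (Zk k nu *m sv nu k).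
Proof.
have -> : iota 0 k.+1 = rcons (iota 0 k) k by rewrite -addn1 iotaD cats1.
rewrite map_rcons QKD_E'; last by case: (iota 0 k).
by rewrite evolve_rcons size_map size_iota.
Qed.

Lemma charE k nu A : linE k ->
  \tr (Ups k *m (A *t tens k (sv nu))) = \tr (Zk k nu *m A).
Proof.
move=> HE; have eA := expand A.
rewrite [in LHS]eA [in RHS]eA tensmx_suml !mulmx_sumr !tr_sum.
apply: eq_bigr => a _.
rewrite tensmxZl -!scalemxAr !mxtraceZ; congr (_ * _).
pose nu' j := if j == k then a else nu j.
have -> : sigma a *t tens k (sv nu) = tens k.+1 (sv nu').
  rewrite /= /sv /nu' eqxx; congr (_ *t _); apply: eq_tens => j jk.
  by rewrite (ltn_eqF jk).
rewrite charD // QKD_last /sv /nu' eqxx.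
have -> : Zk k nu' = Zk k nu.
  rewrite /Zk; congr (E' k (kd_evolve _ _ _ _)); apply/eq_in_map => j.
  by rewrite mem_iota => /andP [_ jk]; rewrite /sv /nu' (ltn_eqF jk).
done.
Qed.

Lemma sum_idx (V : nmodType) m n (F : 'I_(m * n) -> V) :
  \sum_(P < m * n) F P = \sum_(i < m) \sum_(j < n) F (mxtens_index (i, j)).
Proof.
rewrite -(@sum_pair V m n (fun i j => F (mxtens_index (i, j)))).
by apply: eq_bigr => P _; rewrite -surjective_pairing mxtens_unindexK.
Qed.

Lemma dd_gt0 : (0 < d * d)%N. Proof. by rewrite muln_gt0 d_gt0. Qed.
Definition i0 : 'I_(d * d) := Ordinal dd_gt0.

Definition Zpt k (X : 'M[C]_(d * dpow d k)) a : 'M[C]_(dpow d k) :=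
  \matrix_(p, q) \sum_(i < d) \sum_(j < d)
     X (mxtens_index (i, p)) (mxtens_index (j, q)) * sigma a j i.
Arguments Zpt {k}.

Lemma trZpt k (X : 'M[C]_(d * dpow d k)) a (B : 'M[C]_(dpow d k)) :
  \tr (X *m (sigma a *t B)) = \tr (Zpt X a *m B).
Proof.
rewrite /mxtrace sum_idx.
under eq_bigr => i _ do under eq_bigr => p _ do rewrite mxE sum_idx.
under eq_bigr => i _ do under eq_bigr => p _ do under eq_bigr => j _ do
  under eq_bigr => q _ do rewrite tensmxE.
symmetry.
rewrite (eq_bigr (fun p => \sum_q (\sum_i \sum_j X (mxtens_index (i, p)) (mxtens_index (j, q)) * (sigma a j i * B q p)))); last first.
  move=> p _; rewrite mxE; apply: eq_bigr => q _; rewrite mxE mulr_suml; apply: eq_bigr => i _.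
  rewrite mulr_suml; apply: eq_bigr => j _; by rewrite mulrA.
under eq_bigr => p _ do under eq_bigr => q _ do rewrite exchange_big /=.
under eq_bigr => p _ do rewrite exchange_big /=.
under eq_bigr => p _ do under eq_bigr => j _ do rewrite exchange_big /=.
under eq_bigr => p _ do rewrite exchange_big /=.
rewrite exchange_big /=; apply: eq_bigr => i _.
done.
Qed.

Lemma uniqueness k (X : 'M[C]_(dpow d k)) :
  (forall nu, \tr (X *m tens k (sv nu)) = 0) -> X = 0.
Proof.
elim: k X => [|k IH] X H.
  move: (H (fun _ => i0)); rewrite /= mulmx1 /mxtrace big_ord1 => HX.
  by apply/matrixP => i j; rewrite !ord1 mxE.
have HZ : forall a, Zpt X a = 0.
  move=> a; apply: IH => nu.
  rewrite -trZpt.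
  pose nu' j := if j == k then a else nu j.
  have -> : sigma a *t tens k (sv nu) = tens k.+1 (sv nu').
    rewrite /= /sv /nu' eqxx; congr (_ *t _); apply: eq_tens => j jk.
    by rewrite (ltn_eqF jk).
  exact: H.
apply/matrixP => P Q.
case: (mxtens_indexP P) => k0 p; case: (mxtens_indexP Q) => l0 q.
rewrite mxE.
have : d%:R * X (mxtens_index (k0, p)) (mxtens_index (l0, q))
       = \sum_a Zpt X a p q * sigma a k0 l0.
  under eq_bigr => a _ do rewrite mxE mulr_suml.
  under eq_bigr => a _ do under eq_bigr => i _ do rewrite mulr_suml.
  rewrite exchange_big /=.
  under eq_bigr => i _ do rewrite exchange_big /=.
  under eq_bigr => i _ do under eq_bigr => j _ do
    (under eq_bigr => a _ do rewrite -mulrA; rewrite -mulr_sumr complete).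
  rewrite (bigD1 k0) //= (bigD1 l0) //= !eqxx /= mulr1 big1 ?addr0.
    rewrite big1 ?addr0; first by rewrite mulrC.
    by move=> i /negbTE ->; rewrite big1 // => j _; rewrite /= ?mulr0.
  by move=> j /negbTE ->; rewrite ?andbF ?mulr0.
under eq_bigr => a _ do rewrite HZ mxE mul0r.
rewrite big1 // => /eqP; rewrite mulf_eq0 (negbTE d_neq0) /= => /eqP.
done.
Qed.

Lemma lin_sum0 f I (r : seq I) (F : I -> 'M[C]_d) :
  lin f -> f (\sum_(i <- r) F i) = \sum_(i <- r) f (F i).
Proof.
move=> Hf; have := @lin_sum f I r (fun _ => 1) F Hf.
under eq_bigr do rewrite scale1r; move=> ->.
by under eq_bigr do rewrite scale1r.
Qed.

Lemma Zk_succ k nu : Zk k.+1 nu = E k.+1 (Zk k nu *m sv nu k).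
Proof.
rewrite /Zk.
have -> : iota 0 k.+1 = rcons (iota 0 k) k by rewrite -addn1 iotaD cats1.
by rewrite map_rcons evolve_rcons size_map size_iota.
Qed.

Lemma star_char k nu : linE k.+1 ->
  \tr (star (jam (E k.+1)) (Ups k) *m tens k.+2 (sv nu))
  = QKD rho E [seq sv nu i | i <- iota 0 k.+2].
Proof.
move=> HE.
have HEk : linE k by move=> i /andP [i1 ik]; apply: HE; rewrite i1 /=; exact: ltnW.
rewrite QKD_last Zk_succ.
rewrite (matrix_sum_delta (Zk k nu *m sv nu k)).
have Hk : lin (E k.+1) by apply: HE; rewrite /= leqnn.
rewrite lin_sum0 //.
under eq_bigr => i _ do rewrite lin_sum //.
rewrite mulmx_suml tr_sum.
under [RHS]eq_bigr => i _ do rewrite mulmx_suml tr_sum.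
under [RHS]eq_bigr => i _ do under eq_bigr => j _ do rewrite -scalemxAl mxtraceZ.
rewrite /star /jam tensmx_suml castmx_sum mulmx_suml mulmx_suml tr_sum.
apply: eq_bigr => i _.
rewrite tensmx_suml castmx_sum mulmx_suml mulmx_suml tr_sum.
apply: eq_bigr => j _.
rewrite tensA tensmx_mul mulmx1 /= tensmx_mul tr_tensmx mulrC; congr (_ * _).
rewrite -mulmxA mxtrace_mulC -mulmxA tensmx_mul mulmx1 charE // mulmxA tr_delta.
done.
Qed.

Lemma tr_subr n (A B : 'M[C]_n) : \tr (A - B) = \tr A - \tr B.
Proof.
rewrite mxtraceD; congr (_ + _); rewrite /mxtrace -sumrN; apply: eq_bigr => i _.
by rewrite mxE.
Qed.

End Main.

Theorem theorem4 (C : numClosedFieldType) (d n : nat) (d_gt0 : (0 < d)%N)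
  (rho : 'M[C]_d) (E : nat -> 'M[C]_d -> 'M[C]_d)
  (sigma : 'I_(d * d) -> 'M[C]_d) (spec : 'I_(d * d) -> seq (C * 'M[C]_d)) :
  density rho ->
  (forall j, (1 <= j <= n)%N -> cptp (E j)) ->
  op_basis sigma ->
  (forall mu, spectral_decomp (sigma mu) (spec mu)) ->
  KDstate rho E sigma spec 0 = castmx (esym (muln1 d), esym (muln1 d)) rho /\
  (forall k, (k < n)%N ->
     KDstate rho E sigma spec k.+1 =
     star (jam (E k.+1)) (KDstate rho E sigma spec k)).
Proof.
move=> _ HE Hb Hs.
have Hlin : forall j, (1 <= j <= n)%N -> @lin C d (E j) by move=> j Hj; apply: cptp_lin; exact: HE.
split.
  apply/eqP; rewrite -subr_eq0; apply/eqP.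
  apply: (@uniqueness C d d_gt0 sigma Hb 1) => nu.
  rewrite mulmxBl tr_subr.
  have := @charD C d d_gt0 rho E sigma spec Hb Hs 0 nu.
  rewrite /Ups => ->; last by move=> i; rewrite ltnNge andNb.
  rewrite /= tens_mx_scalar scale1r castmx_mulmx tr_castmx /sv subrr //.
move=> k kn.
apply/eqP; rewrite -subr_eq0; apply/eqP.
apply: (@uniqueness C d d_gt0 sigma Hb k.+2) => nu.
rewrite mulmxBl tr_subr.
have := @charD C d d_gt0 rho E sigma spec Hb Hs k.+1 nu.
rewrite /Ups => ->; last by move=> i /andP [i1 ik]; apply: Hlin; rewrite i1 /=; exact: leq_trans ik kn.
rewrite (@star_char C d d_gt0 rho E sigma spec Hb Hs k nu) ?subrr //.
by move=> i /andP [i1 ik]; apply: Hlin; rewrite i1 /=; exact: leq_trans ik kn.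
Qed.
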